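(* Let $G$ be a regular graph and let $H$ be a graph that is not isomorphic to the edgeless graph $\overline{K_n}$ for any odd $n$. Then the lexicographic product $G\circ H$ is a balanced distance magic graph if and only if $H$ is a balanced distance magic graph.
   Context: All graphs are finite and simple. For a graph $G$ and vertex $x$, $N(x)=N_G(x)$ is the (open) neighborhood of $x$. A distance magic labeling of a graph $G$ of order $N$ is a bijection $\ell\colon V(G)\to\{1,\dots,N\}$ for which there is a constant $k$ such that the weight $w(x)=\sum_{y\in N(x)}\ell(y)$ equals $k$ for every $x\in V(G)$. A balanced distance magic labeling of a graph $G$ with an even number $N$ of vertices is a distance magic labeling $\ell$ such that for every $w\in V(G)$: whenever $u\in N(w)$ has $\ell(u)=i$, there is $v\in N(w)$ with $\ell(v)=N+1-i$. The vertices labeled $i$ and $N+1-i$ are called twins. $G$ is a balanced distance magic graph if it has an even number of vertices and admits a balanced distance magic labeling (in particular, an edgeless graph with an even number of vertices is balanced distance magic). The lexicographic product $G\circ H$ has vertex set $V(G)\times V(H)$, with $(g,h)$ adjacent to $(g',h')$ iff either $gg'\in E(G)$, or $g=g'$ and $hh'\in E(H)$. *)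

(* Defs.v *)
From mathcomp Require Import all_boot.
Set Implicit Arguments. Unset Strict Implicit. Unset Printing Implicit Defensive.

Definition simple_graph (T : finType) (e : rel T) : Prop :=
  symmetric e /\ irreflexive e.

Definition nbhd (T : finType) (e : rel T) (x : T) : {set T} := [set y | e x y].

Definition regular (T : finType) (e : rel T) : Prop :=
  exists r : nat, forall x : T, #|nbhd e x| = r.

Definition graph_iso (T1 T2 : finType) (e1 : rel T1) (e2 : rel T2) : Prop :=
  exists f : T1 -> T2, bijective f /\ forall x y, e2 (f x) (f y) = e1 x y.

Definition edgeless_graph (n : nat) : rel 'I_n := fun _ _ => false.
Arguments edgeless_graph n : clear implicits.

Definition lexprod (T1 T2 : finType) (e1 : rel T1) (e2 : rel T2) : rel (T1 * T2) :=
  fun p q => e1 p.1 q.1 || ((p.1 == q.1) && e2 p.2 q.2).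

Definition labeling (T : finType) (l : T -> nat) : Prop :=
  injective l /\ (forall x, 1 <= l x <= #|T|) /\
  (forall i, 1 <= i <= #|T| -> exists x, l x = i).

Definition weight (T : finType) (e : rel T) (l : T -> nat) (x : T) : nat :=
  \sum_(y in nbhd e x) l y.

Definition distance_magic_labeling (T : finType) (e : rel T) (l : T -> nat) : Prop :=
  labeling l /\ exists k : nat, forall x : T, weight e l x = k.

Definition balanced_dm_labeling (T : finType) (e : rel T) (l : T -> nat) : Prop :=
  distance_magic_labeling e l /\
  forall w u, u \in nbhd e w ->
    exists2 v, v \in nbhd e w & l v = #|T| + 1 - l u.

Definition balanced_distance_magic (T : finType) (e : rel T) : Prop :=
  ~~ odd #|T| /\ exists l : T -> nat, balanced_dm_labeling e l.

(* Main.v *)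
Require Import Defs.
From mathcomp Require Import all_boot zify.
Set Implicit Arguments. Unset Strict Implicit. Unset Printing Implicit Defensive.
Definition twin_inv (T : finType) (e : rel T) (t : T -> T) : Prop :=
  (forall x, t (t x) = x) /\ (forall x, t x != x) /\ (forall x y, e x (t y) = e x y).

Lemma weight_twice (T : finType) (e : rel T) (l : T -> nat) (t : T -> T) c :
  (forall x, t (t x) = x) -> (forall x y, e x (t y) = e x y) ->
  (forall x, l x + l (t x) = c) -> forall w, 2 * weight e l w = c * #|nbhd e w|.
Proof.
move=> tK tN lc w; rewrite /weight.
have E : \sum_(y in nbhd e w) l y = \sum_(y in nbhd e w) l (t y).
  rewrite (reindex_inj (can_inj tK)) /=; apply: eq_bigl => y.
  by rewrite !inE tN.
rewrite mul2n -addnn {2}E -big_split /=.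
rewrite (eq_bigr (fun _ => c)) ?sum_nat_const 1?mulnC // => y _; exact: lc.
Qed.

Lemma bdm_to (T : finType) (e : rel T) :
  balanced_distance_magic e -> regular e /\ exists t, twin_inv e t.
Proof.
move=> [ev [l [[[linj [lr ls]] [k hk]] bal]]].
set N := #|T| in ev lr ls bal *.
pose t x := odflt x [pick y | l y == N + 1 - l x].
have lt x : l (t x) = N + 1 - l x.
  rewrite /t; case: pickP => [y /eqP //|H].
  have [|y hy] := ls (N + 1 - l x); first by have := lr x; lia.
  by have := H y; rewrite hy eqxx.
have tK x : t (t x) = x.
  apply: linj; rewrite !lt; have := lr x; lia.
have tN x y : e x (t y) = e x y.
  apply/idP/idP => h.
  - have [|v] := bal x (t y); first by rewrite inE.
    rewrite inE => hv; rewrite lt => hl.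
    have -> : y = v by apply: linj; rewrite hl; have := lr y; lia.
    done.
  - have [|v] := bal x y; first by rewrite inE.
    rewrite inE => hv; rewrite -lt => hl.
    by rewrite -(linj _ _ hl).
have lc x : l x + l (t x) = N + 1 by rewrite lt; have := lr x; lia.
split; last first.
  exists t; split; first exact: tK; split => // x; apply/eqP => hx.
  have := lt x; rewrite hx => h.
  have h2 : N.+1 = (l x).*2 by lia.
  by move: (odd_double (l x)); rewrite -h2 /= ev.
exists ((2 * k) %/ (N + 1)) => x.
have := weight_twice tK tN lc x; rewrite hk => ->.
by rewrite mulKn // addn1.
Qed.
Lemma bdm_from (T : finType) (e : rel T) :
  regular e -> (exists t, twin_inv e t) -> balanced_distance_magic e.
Proof.
move=> [r hr] [t [tK [tD tN]]].
set N := #|T|.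
pose S := [set x | (enum_rank x < enum_rank (t x))%N].
have tS x : (t x \in S) = (x \notin S).
  rewrite !inE tK; have : enum_rank x != enum_rank (t x).
    by apply/eqP => /enum_rank_inj h; move: (tD x); rewrite -h eqxx.
  move/eqP => ne; have ne' : (enum_rank x : nat) <> enum_rank (t x).
    by move=> h; apply: ne; apply: val_inj.
  by apply/idP/idP; lia.
have cS : #|S|.*2 = N.
  have hC : #|~: S| = #|S|.
    rewrite -(card_preimset S (can_inj tK)); apply: eq_card => x.
    by rewrite in_setC -tS !inE.
  by rewrite -addnn -{2}hC cardsC.
pose c (x : T) := #|[set y in S | (enum_rank y <= enum_rank x)%N]|.
have cle x : c x <= #|S| by apply: subset_leq_card; apply/subsetP => y; rewrite inE => /andP[].
have cge x : x \in S -> 0 < c x.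
  by move=> xS; apply/card_gt0P; exists x; rewrite inE xS leqnn.
have clt x y : x \in S -> (enum_rank x < enum_rank y)%N -> y \in S -> c x < c y.
  move=> xS lxy yS; apply: proper_card; apply/properP; split.
    apply/subsetP => z; rewrite !inE => /andP[-> h] /=; exact: leq_trans h (ltnW lxy).
  by exists y; [rewrite inE yS leqnn | rewrite inE yS /= -ltnNge].
have cinj x y : x \in S -> y \in S -> c x = c y -> x = y.
  move=> xS yS hc; case: (ltngtP (enum_rank x) (enum_rank y)) => h.
  - by have := clt _ _ xS h yS; rewrite hc ltnn.
  - by have := clt _ _ yS h xS; rewrite hc ltnn.
  - by apply: enum_rank_inj; apply: val_inj.
pose l (x : T) := if x \in S then c x else N + 1 - c (t x).
have lc x : l x + l (t x) = N + 1.
  rewrite /l tS tK; case: ifP => xS /=.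
  - by have := cle x; lia.
  - by have := cle (t x); lia.
have lr x : 1 <= l x <= N.
  rewrite /l; case: ifP => xS.
  - by have := cle x; have := cge x xS; lia.
  - have := cle (t x); have := cge (t x); rewrite tS xS => /(_ isT); lia.
have linj : injective l.
  move=> x y; rewrite /l; case: ifP => xS; case: ifP => yS.
  - exact: cinj.
  - have := cle x; have := cle (t y); have := cge x xS; lia.
  - have := cle y; have := cle (t x); have := cge y yS; lia.
  - move=> h; apply: (can_inj tK); apply: cinj; rewrite ?tS ?xS ?yS //.
    have := cle (t x); have := cle (t y); lia.
split.
  by move: cS; rewrite /N => <-; rewrite odd_double.
exists l; split; last first.
  move=> w u hu; exists (t u); first by rewrite inE tN -inE.
  by have := lc u; lia.
split; last first.
  exists ((N + 1) * r)./2 => w.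
  by rewrite -(hr w) -(weight_twice tK tN lc) mul2n doubleK.
split => //; split => // i hi.
have lo x : (l x).-1 < N by have := lr x; lia.
pose f x : 'I_N := Ordinal (lo x).
have finj : injective f by move=> x y /(congr1 val) /= h; apply: linj; have := lr x; have := lr y; lia.
have hi' : i.-1 < N by lia.
have := inj_card_onto finj _ (Ordinal hi'); rewrite card_ord leqnn => /(_ isT).
case/codomP => x /(congr1 val) /= h; exists x; have := lr x; lia.
Qed.
Lemma deg_lex (T1 T2 : finType) (eG : rel T1) (eH : rel T2) g h :
  eG g g = false ->
  #|nbhd (lexprod eG eH) (g, h)| = #|nbhd eG g| * #|T2| + #|nbhd eH h|.
Proof.
move=> irr.
have -> : nbhd (lexprod eG eH) (g, h) =
   setX (nbhd eG g) [set: T2] :|: setX [set g] (nbhd eH h).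
  apply/setP => [[a b]]; rewrite !inE /lexprod /= andbT (eq_sym a).
  done.
rewrite cardsU !cardsX cards1 cardsT mul1n.
have -> : setX (nbhd eG g) [set: T2] :&: setX [set g] (nbhd eH h) = set0.
  apply/setP => [[a b]]; rewrite !inE.
  by case: eqP => [->|]; rewrite ?irr ?andbF.
by rewrite cards0 subn0.
Qed.

Lemma edgeless_even (T : finType) (e : rel T) :
  (forall x y, e x y = false) -> ~~ odd #|T| -> balanced_distance_magic e.
Proof.
move=> he ev; split => //.
exists (fun x => (enum_rank x).+1); split; last by move=> w u; rewrite inE he.
split; last first.
  by exists 0 => x; rewrite /weight big_pred0 // => y; rewrite inE he.
split; first by move=> x y [] /val_inj /enum_rank_inj.
split; first by move=> x; rewrite /= ltn_ord.
move=> i hi.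
have hi' : i.-1 < #|T| by lia.
exists (enum_val (Ordinal hi')); rewrite enum_valK /=; lia.
Qed.

Theorem mainTheorem3 (T1 T2 : finType) (eG : rel T1) (eH : rel T2) :
  simple_graph eG -> simple_graph eH ->
  0 < #|T1| ->
  regular eG ->
  ~ (exists n : nat, odd n /\ graph_iso eH (edgeless_graph n)) ->
  balanced_distance_magic (lexprod eG eH) <-> balanced_distance_magic eH.
Proof.
move=> [symG irrG] [symH irrH] /card_gt0P [g0 _] [rG hrG] noodd.
split.
- move=> /bdm_to [[r hr] [t [tK [tD tN]]]].
  have hrH : forall h, #|nbhd eH h| = r - rG * #|T2|.
    move=> h; have := hr (g0, h); rewrite deg_lex // hrG; lia.
  case: (boolP [exists x, [exists y, eH x y]]) => [/existsP [x0 /existsP [y0 e0]]|ne].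
  + have nb h : exists h1, eH h h1.
      have : 0 < #|nbhd eH h|.
        rewrite hrH -(hrH x0); apply/card_gt0P; exists y0; by rewrite inE.
      by case/card_gt0P => h1; rewrite inE; exists h1.
    have fst h : (t (g0, h)).1 = g0.
      case E : (t (g0, h)) => [g' h'] /=; apply/eqP; apply/negP => /negP ne.
      have [h1 eh1] := nb h.
      have e1 : eG g0 g'.
        have := tN (g0, h1) (g0, h); rewrite E /lexprod /= irrG eqxx /= (symH h1 h) eh1.
        by rewrite eq_sym (negbTE ne) /= orbF.
      have := tN (g', h') (g0, h); rewrite E /lexprod /= irrG irrH (symG g' g0) e1 /=.
      by rewrite andbF.
    have tE h : t (g0, h) = (g0, (t (g0, h)).2).
      by move: (fst h); case: (t (g0, h)) => a b /= ->.
    apply: bdm_from; first by exists (r - rG * #|T2|).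
    exists (fun h => (t (g0, h)).2); split; [|split].
    * move=> h; have E := tE h.
      by rewrite -E tK.
    * move=> h; apply/eqP => hh; have E : t (g0, h) = (g0, h).
        by rewrite tE hh.
      by move: (tD (g0, h)); rewrite E eqxx.
    * move=> x y; have E := tE y.
      have := tN (g0, x) (g0, y); rewrite E /lexprod /= irrG eqxx /=.
      done.
  + have he x y : eH x y = false.
      apply/negP => exy; move: ne; rewrite negb_exists => /forallP /(_ x).
      by rewrite negb_exists => /forallP /(_ y); rewrite exy.
    apply: edgeless_even => //; apply/negP => od; apply: noodd.
    exists #|T2|; split => //; exists enum_rank; split => //.
    exact: (Bijective (@enum_rankK T2) (@enum_valK T2)).
- move=> /bdm_to [[r hr] [t [tK [tD tN]]]].
  apply: bdm_from.
    exists (rG * #|T2| + r) => [[g h]]; by rewrite deg_lex // hrG hr.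
  exists (fun p => (p.1, t p.2)); split; [|split].
  + by move=> [g h] /=; rewrite tK.
  + by move=> [g h]; rewrite /= xpair_eqE eqxx (negbTE (tD h)).
  + by move=> [a b] [c d]; rewrite /lexprod /= tN.
Qed.
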